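(* Fix $b>0$, $c>0$, $0<\theta<c$, let $a\in\mathbb R$ vary, and consider the two-player complete-information contest with efforts $x,y\ge0$ and payoffs $P(x,y)-\theta x$, $1-P(x,y)-\theta y$, where $P(x,y)=\tfrac12+(x-y)\bigl(c-b(x+y)+axy\bigr)$ (no truncation). Total expected equilibrium effort (rent dissipation) equals $2x^*(a)$ on the pure-equilibrium region $\{a:b^2\ge a(c-\theta)\}$, where $x^*(a)=\frac{b-\sqrt{b^2-a(c-\theta)}}{a}$ for $a\ne0$ and $x^*(0)=\frac{c-\theta}{2b}$ is the symmetric equilibrium effort, and equals $2b/a$ on the mixed-equilibrium region $\{a:b^2<a(c-\theta)\}$ (for every mixed equilibrium). Rent dissipation is maximized at $b^2=a(c-\theta)$ (i.e. $\zeta=0$) rather than at the extreme of suppression: it increases in $a$ on the pure region and decreases in $a$ on the mixed region.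
   Context: $\zeta=\frac{b^2-a(c-\theta)}{a^2}$ for $a\neq0$. The prize is normalized to $1$, so rent dissipation is measured by total expected effort $E[x+y]$. *)

(* Defs.v *)
From HB Require Import structures.
From mathcomp Require Import all_boot all_order all_algebra.
From mathcomp Require Import all_classical all_reals all_analysis.
Set Implicit Arguments. Unset Strict Implicit. Unset Printing Implicit Defensive.
Import Order.TTheory GRing.Theory Num.Theory.
Import numFieldNormedType.Exports.
Local Open Scope classical_set_scope.
Local Open Scope ring_scope.

Definition Pwin {R : realType} (a b c x y : R) : R :=
  2^-1 + (x - y) * (c - b * (x + y) + a * x * y).

Definition payoff1 {R : realType} (a b c theta x y : R) : R :=
  Pwin a b c x y - theta * x.
Definition payoff2 {R : realType} (a b c theta x y : R) : R :=
  1 - Pwin a b c x y - theta * y.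

(* A mixed strategy: a probability law on efforts, supported on [0,+oo),
   with finite second moment (so all expected payoffs are well defined). *)
Definition admissible {R : realType} (mu : probability R R) : Prop :=
  mu [set x : R | 0 <= x] = 1%E /\
  mu.-integrable setT (fun x : R => (x ^+ 2)%:E).

Definition Epayoff1 {R : realType} (a b c theta : R)
  (mu nu : probability R R) : \bar R :=
  (\int[mu]_x \int[nu]_y (payoff1 a b c theta x y)%:E)%E.
Definition Epayoff2 {R : realType} (a b c theta : R)
  (mu nu : probability R R) : \bar R :=
  (\int[mu]_x \int[nu]_y (payoff2 a b c theta x y)%:E)%E.

(* (Mixed-strategy) Nash equilibrium; pure equilibria are the Dirac case. *)
Definition is_equilibrium {R : realType} (a b c theta : R)
  (mu nu : probability R R) : Prop :=
  [/\ admissible mu, admissible nu,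
      (forall mu' : probability R R, admissible mu' ->
         (Epayoff1 a b c theta mu' nu <= Epayoff1 a b c theta mu nu)%E) &
      (forall nu' : probability R R, admissible nu' ->
         (Epayoff2 a b c theta mu nu' <= Epayoff2 a b c theta mu nu)%E)].

Definition total_effort {R : realType} (mu nu : probability R R) : \bar R :=
  (\int[mu]_x x%:E + \int[nu]_y y%:E)%E.

Definition xstar {R : realType} (b c theta a : R) : R :=
  if a == 0 then (c - theta) / (2 * b)
  else (b - Num.sqrt (b ^+ 2 - a * (c - theta))) / a.

Definition rent_diss {R : realType} (b c theta a : R) : R :=
  if a * (c - theta) <= b ^+ 2 then 2 * xstar b c theta a
  else 2 * b / a.

(* Main.v *)
Require Import Defs.
From HB Require Import structures.
From mathcomp Require Import all_boot all_order all_algebra.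
From mathcomp Require Import all_classical all_reals all_analysis.
From mathcomp Require Import measurable_realfun ring lra.
Import Order.TTheory GRing.Theory Num.Theory.
Local Open Scope classical_set_scope.
Local Open Scope ring_scope.

Section moments.
Context {R : realType}.

Lemma mge0 : measurable [set x : R | 0 <= x].
Proof.
rewrite (_ : [set x : R | 0 <= x] = `[0, +oo[%classic); first exact: measurable_itv.
by apply/seteqP; split => x /=; rewrite in_itv /= andbT.
Qed.

Lemma mfid : measurable_fun [set: R] (fun x : R => x%:E).
Proof. exact/measurable_EFinP. Qed.

Lemma mfx2 : measurable_fun [set: R] (fun x : R => ((x ^+ 2)%:E : \bar R)).
Proof. by apply/measurable_EFinP; exact: measurable_funX. Qed.

Variable mu : probability R R.
Hypothesis hmu : admissible mu.

Lemma int_cst (r : R) : mu.-integrable setT (fun _ => r%:E).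
Proof. exact: (finite_measure_integrable_cst mu r measurableT). Qed.

Lemma int_x2 : mu.-integrable setT (fun x : R => (x ^+ 2)%:E).
Proof. by case: hmu. Qed.

Lemma int_x : mu.-integrable setT (fun x : R => x%:E).
Proof.
apply: (@le_integrable _ _ _ mu setT measurableT (fun x : R => x%:E) (fun x : R => (1 + x ^+ 2)%:E) mfid).
  move=> x _; rewrite !abse_EFin lee_fin.
  rewrite [X in _ <= X]ger0_norm; last by rewrite addr_ge0 // sqr_ge0.
  have h : `|x| <= 1 + `|x| ^+ 2.
    have := sqr_ge0 (`|x| - 2^-1). nra.
  by rewrite real_normK ?num_real // in h.
rewrite (_ : (fun x => _) = (fun x : R => 1%:E) \+ (fun x : R => (x ^+ 2)%:E))%E.
  by apply: integrableD => //; [exact: int_cst | exact: int_x2].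
by apply/funext => x /=; rewrite EFinD.
Qed.

Definition mom1 := fine (\int[mu]_x x%:E)%E.
Definition mom2 := fine (\int[mu]_x (x ^+ 2)%:E)%E.

Lemma mom1E : (\int[mu]_x x%:E)%E = mom1%:E.
Proof. by rewrite fineK //; exact: integrable_fin_num int_x. Qed.
Lemma mom2E : (\int[mu]_x (x ^+ 2)%:E)%E = mom2%:E.
Proof. by rewrite fineK //; exact: integrable_fin_num int_x2. Qed.

Lemma int_poly (p0 p1 p2 : R) :
  mu.-integrable setT (fun x : R => (p0 + p1 * x + p2 * x ^+ 2)%:E).
Proof.
rewrite (_ : (fun x => _) = ((fun x : R => p0%:E) \+ (fun x : R => p1%:E * x%:E))
     \+ (fun x : R => p2%:E * (x ^+ 2)%:E))%E; last first.
  by apply/funext => x /=; rewrite !EFinD !EFinM.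
apply: integrableD => //; first apply: integrableD => //.
- exact: int_cst.
- exact: integrableZl int_x.
- exact: integrableZl int_x2.
Qed.

Lemma integral_poly (p0 p1 p2 : R) :
  (\int[mu]_x (p0 + p1 * x + p2 * x ^+ 2)%:E)%E = (p0 + p1 * mom1 + p2 * mom2)%:E.
Proof.
rewrite (eq_integral (fun x => (p0%:E + p1%:E * x%:E) + p2%:E * (x ^+ 2)%:E)%E); last first.
  by move=> x _; rewrite -!EFinM -!EFinD.
rewrite integralD //; last exact: integrableZl int_x2.
  rewrite integralD //; [|exact: int_cst|exact: integrableZl int_x].
  rewrite integralZl //; last exact: int_x.
  rewrite integralZl //; last exact: int_x2.
  rewrite integral_cst // (_ : Measure.sort mu setT = 1%E); last exact: probability_setT.
  rewrite mule1 mom1E mom2E.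
  by rewrite -!EFinM -!EFinD.
apply: integrableD => //; [exact: int_cst|exact: integrableZl int_x].
Qed.

Lemma mom2_ge : mom1 ^+ 2 <= mom2.
Proof.
have := integral_poly (mom1 ^+ 2) (- (2 * mom1)) 1.
have -> : (\int[mu]_x ((mom1 ^+ 2) + - (2 * mom1) * x + 1 * x ^+ 2)%:E)%E
         = (\int[mu]_x ((x - mom1) ^+ 2)%:E)%E.
  by apply: eq_integral => x _; congr (_%:E); ring.
move=> h.
have : (0 <= \int[mu]_x ((x - mom1) ^+ 2)%:E)%E.
  by apply: integral_ge0 => x _; rewrite lee_fin sqr_ge0.
rewrite h lee_fin => H; nra.
Qed.

Lemma int_x_max : (\int[mu]_x x%:E)%E = (\int[mu]_x (Num.max x 0)%:E)%E.
Proof.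
apply: (ae_eq_integral (fun x : R => (Num.max x 0)%:E)) => //.
- apply/measurable_EFinP; have H := @measurable_maxr _ _ _ setT (fun x : R => x) (fun _ => 0) (@measurable_id _ _ _) (measurable_cst _); exact: H.
- exists (~` [set x : R | 0 <= x]); split.
  + exact: measurableC mge0.
  + apply: (eq_trans (probability_setC mu mge0)).
    by case: hmu => -> _; rewrite subee.
  + move=> x /= hx hx0; apply: hx => _.
    by congr (_%:E); apply/esym/max_idPl.
Qed.

Lemma mom1_ge0 : 0 <= mom1.
Proof.
have h := int_x_max.
have : (0 <= \int[mu]_x (Num.max x 0)%:E)%E.
  by apply: integral_ge0 => x _; rewrite lee_fin le_max lexx orbT.
by rewrite -h mom1E lee_fin.
Qed.

End moments.

Section mix.
Context {R : realType} (p : R) (hp0 : 0 <= p) (hp1 : p <= 1) (z : R).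
Let hq : 0 <= 1 - p. Proof. by rewrite subr_ge0. Qed.

Definition mixm : set R -> \bar R :=
  measure_add (mscale (NngNum hp0) (@dirac _ R 0 R)) (mscale (NngNum hq) (@dirac _ R z R)).
HB.instance Definition _ := Measure.on mixm.

Lemma mixmE A : mixm A = (p%:E * (@dirac _ R 0%R R) A + (1 - p)%R%:E * (@dirac _ R z R) A)%E.
Proof. by rewrite /mixm measure_addE. Qed.

Lemma mixm_setT : mixm setT = 1%E.
Proof.
rewrite mixmE !diracT !mule1 -EFinD.
by congr (_%:E); ring.
Qed.

HB.instance Definition _ := Measure_isProbability.Build _ _ _ mixm mixm_setT.

Definition mixp : probability R R := mixm.

Lemma mix_ge0_integral (f : R -> R) : measurable_fun setT f -> (forall x, 0 <= f x) ->
  (\int[mixp]_x (f x)%:E)%E = (p * f 0 + (1 - p) * f z)%:E.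
Proof.
move=> mf f0.
have mfE : measurable_fun setT (fun x => (f x)%:E) by apply/measurable_EFinP.
have f0E : forall x, setT x -> (0 <= (f x)%:E)%E by move=> x _; rewrite lee_fin.
rewrite ge0_integral_measure_add // !ge0_integral_mscale // !integral_dirac //.
by rewrite !diracT !mul1e /= -!EFinM -EFinD.
Qed.

End mix.
Arguments mixp {R p} hp0 hp1 z.
Arguments mix_ge0_integral {R p} hp0 hp1 z [f].
Arguments mixmE {R p} hp0 hp1 z.

Section mixadm.
Context {R : realType} (p : R) (hp0 : 0 <= p) (hp1 : p <= 1) (z : R) (hz : 0 <= z).

Lemma mix_adm : admissible (mixp hp0 hp1 z).
Proof.
split.
  apply: (eq_trans (mixmE hp0 hp1 z _)).
  rewrite !diracE !mem_set //= -!EFinM -EFinD.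
  by congr (_%:E); ring.
apply/integrableP; split; first exact: mfx2.
rewrite (eq_integral (fun x : R => (x ^+ 2)%:E)); last first.
  by move=> x _; rewrite abse_EFin ger0_norm // sqr_ge0.
rewrite (mix_ge0_integral hp0 hp1 z (f := fun x : R => x ^+ 2)) ?ltry //.
all: try exact: exprn_measurable.
all: try (by move=> x; rewrite sqr_ge0).
Qed.

Lemma mix_mom2 : mom2 (mixp hp0 hp1 z) = (1 - p) * z ^+ 2.
Proof.
rewrite /mom2 (mix_ge0_integral hp0 hp1 z (f := fun x : R => x ^+ 2)) /=.
all: try (by rewrite expr0n /= mulr0 add0r).
all: try exact: exprn_measurable.
all: try (by move=> x; rewrite sqr_ge0).
Qed.

Lemma mix_mom1 : mom1 (mixp hp0 hp1 z) = (1 - p) * z.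
Proof.
rewrite /mom1 (int_x_max _ mix_adm).
rewrite (mix_ge0_integral hp0 hp1 z (f := fun x : R => Num.max x 0)) /=.
all: try (by rewrite maxxx mulr0 add0r (max_idPl hz)).
all: try (by move=> x; rewrite le_max lexx orbT).
have H := @measurable_maxr _ _ _ setT (fun x : R => x) (fun _ => 0) (@measurable_id _ _ _) (measurable_cst _); exact: H.
Qed.

End mixadm.
Arguments mix_adm {R p} hp0 hp1 {z} hz.
Arguments mix_mom1 {R p} hp0 hp1 {z} hz.
Arguments mix_mom2 {R p} hp0 hp1 {z}.

Section payoffs.
Context {R : realType} (a b c theta : R).
Variables (mu nu : probability R R) (hmu : admissible mu) (hnu : admissible nu).

Lemma Epayoff1E : Epayoff1 a b c theta mu nu =
  ((2^-1 - c * mom1 nu + b * mom2 nu) + (c - theta - a * mom2 nu) * mom1 mu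
   + (a * mom1 nu - b) * mom2 mu)%:E.
Proof.
rewrite /Epayoff1.
rewrite (eq_integral (fun x : R => ((2^-1 - c * mom1 nu + b * mom2 nu)
   + (c - theta - a * mom2 nu) * x + (a * mom1 nu - b) * x ^+ 2)%:E)); last first.
  move=> x _.
  rewrite (eq_integral (fun y : R => ((2^-1 + c * x - b * x ^+ 2 - theta * x)
     + (a * x ^+ 2 - c) * y + (b - a * x) * y ^+ 2)%:E)); last first.
    by move=> y _; rewrite /payoff1 /Pwin; congr (_%:E); ring.
  by rewrite (integral_poly _ hnu); congr (_%:E); ring.
by rewrite (integral_poly _ hmu).
Qed.

Lemma Epayoff2E : Epayoff2 a b c theta mu nu =
  ((2^-1 + (c - theta) * mom1 nu - b * mom2 nu) + (a * mom2 nu - c) * mom1 mu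
   + (b - a * mom1 nu) * mom2 mu)%:E.
Proof.
rewrite /Epayoff2.
rewrite (eq_integral (fun x : R => ((2^-1 + (c - theta) * mom1 nu - b * mom2 nu)
   + (a * mom2 nu - c) * x + (b - a * mom1 nu) * x ^+ 2)%:E)); last first.
  move=> x _.
  rewrite (eq_integral (fun y : R => ((2^-1 - c * x + b * x ^+ 2)
     + (c - theta - a * x ^+ 2) * y + (a * x - b) * y ^+ 2)%:E)); last first.
    by move=> y _; rewrite /payoff2 /Pwin; congr (_%:E); field.
  by rewrite (integral_poly _ hnu); congr (_%:E); ring.
by rewrite (integral_poly _ hmu).
Qed.

Lemma total_effortE : total_effort mu nu = (mom1 mu + mom1 nu)%:E.
Proof. by rewrite /total_effort (mom1E _ hmu) (mom1E _ hnu). Qed.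

End payoffs.

Section real.
Context {R : realType}.

Lemma player {A B M1 M2 : R} : 0 <= M1 -> M1 ^+ 2 <= M2 ->
  (forall x, 0 <= x -> A * x - B * x ^+ 2 <= A * M1 - B * M2) ->
  0 <= B /\ (B = 0 -> A <= 0 /\ (A < 0 -> M1 = 0)) /\
  (0 < B -> M2 = M1 ^+ 2 /\ ((M1 = 0 /\ A <= 0) \/ (0 < M1 /\ A = 2 * B * M1))).
Proof.
move=> M10 M12 H.
have HB : 0 <= B.
  rewrite leNgt; apply/negP => Bn.
  set V := A * M1 - B * M2.
  set t := - B.
  have t0 : 0 < t by rewrite /t oppr_gt0.
  pose x := (`|A| + `|V| + 1) / t + 1.
  have tx : t * x = `|A| + `|V| + 1 + t.
    rewrite /x mulrDr mulrCA mulfV ?mulr1 //; lra.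
  have hA : - A <= `|A| by rewrite -normrN ler_norm.
  have hV : V <= `|V| by exact: ler_norm.
  have x1 : 1 <= x.
    rewrite /x lerDr; apply: divr_ge0; last lra.
    by rewrite addr_ge0 // addr_ge0.
  have := H x ltac:(lra).
  have -> : A * x - B * x ^+ 2 = x * (A + t * x) by rewrite /t; ring.
  rewrite tx -/V => h.
  have : 0 <= (x - 1) * (A + `|A| + `|V| + 1 + t).
    apply: mulr_ge0; first lra.
    have : 0 <= `|V| by [].
    lra.
  nra.
split => //; split.
  move=> B0; subst B.
  have h1 := H (M1 + 1) ltac:(lra).
  have A0 : A <= 0 by nra.
  split => // An.
  have h0 := H 0 (lexx 0).
  nra.
move=> Bp.
have h := H M1 M10.
have e : M2 = M1 ^+ 2 by nra.
split => //.
have [M0|M0] := eqVneq M1 0.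
  left; split => //.
  rewrite leNgt; apply/negP => Ap.
  have hx := H (A / (2 * B)) ltac:(apply: divr_ge0; lra).
  subst M1.
  have : A * (A / (2 * B)) - B * (A / (2 * B)) ^+ 2 = A ^+ 2 / (4 * B).
    field; lra.
  move=> E; rewrite E in hx.
  have : 0 < A ^+ 2 / (4 * B) by apply: divr_gt0; nra.
  rewrite e expr0n /= in hx.
  lra.
right.
have M1p : 0 < M1 by rewrite lt_neqAle eq_sym M0.
split => //.
have [An|Ap] := ltP A 0.
  have h0 := H 0 (lexx 0).
  nra.
have hx := H (A / (2 * B)) ltac:(apply: divr_ge0; lra).
have E : A * (A / (2 * B)) - B * (A / (2 * B)) ^+ 2 - (A * M1 - B * M1 ^+ 2)
   = B * (A / (2 * B) - M1) ^+ 2.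
  field; lra.
rewrite e in hx.
have : B * (A / (2 * B) - M1) ^+ 2 <= 0 by lra.
move=> h2.
have h3 : (A / (2 * B) - M1) ^+ 2 = 0.
  apply/eqP; rewrite eq_le sqr_ge0 andbT.
  by rewrite -(pmulr_rle0 _ Bp).
move/eqP: h3; rewrite sqrf_eq0 subr_eq0 => /eqP <-.
field; lra.
Qed.


Definition rd (b k a : R) :=
  if a * k <= b ^+ 2 then 2 * (k / (b + Num.sqrt (b ^+ 2 - a * k))) else 2 * b / a.

Lemma root_char {a b k x : R} : 0 < b -> 0 < k -> 0 < b - a * x ->
  a * x ^+ 2 - 2 * b * x + k = 0 ->
  a * k <= b ^+ 2 /\ k / (b + Num.sqrt (b ^+ 2 - a * k)) = x.
Proof.
move=> b0 k0 Bp E.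
have E2 : b ^+ 2 - a * k = (b - a * x) ^+ 2.
  have -> : k = 2 * b * x - a * x ^+ 2 by lra.
  ring.
have S : Num.sqrt (b ^+ 2 - a * k) = b - a * x.
  by rewrite E2 sqrtr_sqr ger0_norm // ltW.
split.
  have := sqr_ge0 (b - a * x); rewrite -E2; lra.
rewrite S.
have -> : k = 2 * b * x - a * x ^+ 2 by lra.
field; lra.
Qed.

Lemma half {a b k M1 M2 m1 m2 : R} : 0 < b -> 0 < k ->
  0 <= M1 -> M1 ^+ 2 <= M2 -> 0 <= m1 -> m1 ^+ 2 <= m2 ->
  (forall x, 0 <= x -> (k - a * m2) * x - (b - a * m1) * x ^+ 2 <=
                       (k - a * m2) * M1 - (b - a * m1) * M2) ->
  (forall y, 0 <= y -> (k - a * M2) * y - (b - a * M1) * y ^+ 2 <=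
                       (k - a * M2) * m1 - (b - a * M1) * m2) ->
  b - a * m1 = 0 -> M1 + m1 = rd b k a.
Proof.
move=> b0 k0 M10 HM m10 Hm H1 H2 B10.
have [_ [P1 _]] := player M10 HM H1.
have [A1 A1n] := P1 B10.
have am1 : a * m1 = b by lra.
have a0 : 0 < a.
  rewrite ltNge; apply/negP => an.
  have : a * m1 <= 0 by rewrite mulr_le0_ge0.
  lra.
have [A1lt|A1eq] := ltP (k - a * m2) 0.
  have M0 := A1n A1lt.
  subst M1.
  have [_ [_ P2]] := player m10 Hm H2.
  have [e2 [[m0 _]|[m1p A2]]] := P2 ltac:(rewrite mulr0 subr0 //).
    by rewrite m0 mulr0 in am1; lra.
  rewrite mulr0 subr0 in A2.
  have M2ge : 0 <= M2 by have := sqr_ge0 (0:R); lra.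
  have : a * M2 >= 0 by rewrite mulr_ge0 // ltW.
  rewrite e2 in A1lt.
  have : b * m1 > 0 by rewrite mulr_gt0.
  have E3 : a * m1 ^+ 2 = b * m1 by rewrite -am1; ring.
  rewrite E3 in A1lt.
  lra.
have A1e : a * m2 = k by lra.
have akb : b ^+ 2 <= a * k.
  have e1 : b ^+ 2 = a * (a * m1 ^+ 2) by rewrite -am1; ring.
  have e3 : a * k = a * (a * m2) by rewrite A1e.
  by rewrite e1 e3 !(ler_pM2l a0).
have [P2a [P2b P2c]] := player m10 Hm H2.
have [B20|B2p] := eqVneq (b - a * M1) 0.
  have aM1 : a * M1 = b by lra.
  have -> : M1 + m1 = 2 * b / a.
    have -> : M1 = b / a by rewrite -aM1; field; lra.
    have -> : m1 = b / a by rewrite -am1; field; lra.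
    field; lra.
  rewrite /rd; case: ifP => // hk.
  have ek : a * k = b ^+ 2 by lra.
  rewrite ek subrr sqrtr0 addr0.
  have -> : k = b ^+ 2 / a by rewrite -ek; field; lra.
  field; lra.
have B2pos : 0 < b - a * M1 by rewrite lt_neqAle eq_sym B2p.
have [em [[m0 _]|[m1p A2e]]] := P2c B2pos.
  by rewrite m0 mulr0 in am1; lra.
exfalso.
have ak : a * k = b ^+ 2 by rewrite -A1e em -am1; ring.
have e4 : a * (k - a * M2) = a * (2 * (b - a * M1) * m1) by rewrite A2e.
have e5 : a ^+ 2 * M2 = 2 * a * b * M1 - b ^+ 2.
  have : a * (2 * (b - a * M1) * m1) = 2 * (b - a * M1) * b by rewrite -am1; ring.
  move: e4; rewrite mulrBr ak => e4 e6.
  rewrite e6 in e4.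
  have -> : a ^+ 2 * M2 = a * (a * M2) by ring.
  lra.
have e6 : a ^+ 2 * M1 ^+ 2 <= a ^+ 2 * M2 by rewrite ler_pM2l // exprn_gt0.
have : 0 < (b - a * M1) ^+ 2 by rewrite exprn_gt0.
have -> : (b - a * M1) ^+ 2 = a ^+ 2 * M1 ^+ 2 - (2 * a * b * M1 - b ^+ 2) by ring.
lra.
Qed.

Lemma main_real {a b k M1 M2 m1 m2 : R} : 0 < b -> 0 < k ->
  0 <= M1 -> M1 ^+ 2 <= M2 -> 0 <= m1 -> m1 ^+ 2 <= m2 ->
  (forall x, 0 <= x -> (k - a * m2) * x - (b - a * m1) * x ^+ 2 <=
                       (k - a * m2) * M1 - (b - a * m1) * M2) ->
  (forall y, 0 <= y -> (k - a * M2) * y - (b - a * M1) * y ^+ 2 <=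
                       (k - a * M2) * m1 - (b - a * M1) * m2) ->
  M1 + m1 = rd b k a.
Proof.
move=> b0 k0 M10 HM m10 Hm H1 H2.
have [B10|B1p] := eqVneq (b - a * m1) 0.
  exact: (half b0 k0 M10 HM m10 Hm H1 H2 B10).
have [B20|B2p] := eqVneq (b - a * M1) 0.
  rewrite addrC; exact: (half b0 k0 m10 Hm M10 HM H2 H1 B20).
have [P1a [_ P1c]] := player M10 HM H1.
have [P2a [_ P2c]] := player m10 Hm H2.
have B1pos : 0 < b - a * m1 by rewrite lt_neqAle eq_sym B1p.
have B2pos : 0 < b - a * M1 by rewrite lt_neqAle eq_sym B2p.
have [eM [[M0 A1n]|[M1p A1e]]] := P1c B1pos;
have [em [[m0 A2n]|[m1p A2e]]] := P2c B2pos.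
- move: A2n; rewrite eM M0 expr0n /= mulr0 subr0; lra.
- exfalso; move: A1n A2e; rewrite eM em M0 expr0n /= !mulr0 !subr0 => A1n A2e.
  have h : a * m1 ^+ 2 >= 2 * b * m1 by lra.
  have : a * m1 >= 2 * b.
    rewrite -(ler_pM2r m1p); lra.
  lra.
- exfalso; move: A2n A1e; rewrite em eM m0 expr0n /= !mulr0 !subr0 => A2n A1e.
  have h : a * M1 ^+ 2 >= 2 * b * M1 by lra.
  have : a * M1 >= 2 * b.
    rewrite -(ler_pM2r M1p); lra.
  lra.
- rewrite eM em in A1e A2e.
  have : (M1 - m1) * ((b - a * m1) + (b - a * M1)) = 0.
    have -> : (M1 - m1) * ((b - a * m1) + (b - a * M1)) =
      ((k - a * M1 ^+ 2) - 2 * (b - a * M1) * m1) - ((k - a * m1 ^+ 2) - 2 * (b - a * m1) * M1).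
      ring.
    lra.
  move/eqP; rewrite mulf_eq0 => /orP[|]; last by move/eqP; lra.
  rewrite subr_eq0 => /eqP Me; subst m1.
  have [hk hx] := root_char b0 k0 B1pos ltac:(lra).
  by rewrite /rd hk hx; ring.
Qed.

End real.


Section final.
Context {R : realType}.

Lemma xstarE (b c theta a : R) : 0 < b -> 0 < c - theta ->
  a * (c - theta) <= b ^+ 2 ->
  xstar b c theta a = (c - theta) / (b + Num.sqrt (b ^+ 2 - a * (c - theta))).
Proof.
move=> b0 k0 hk; rewrite /xstar; case: eqP => [->|/eqP a0].
  rewrite mul0r subr0 sqrtr_sqr ger0_norm ?(ltW b0) //.
  by congr (_ / _); ring.
have s0 : 0 <= Num.sqrt (b ^+ 2 - a * (c - theta)) := sqrtr_ge0 _.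
have s2 : Num.sqrt (b ^+ 2 - a * (c - theta)) ^+ 2 = b ^+ 2 - a * (c - theta).
  by rewrite sqr_sqrtr // subr_ge0.
move: s0 s2; set s := Num.sqrt _ => s0 s2.
apply/eqP; rewrite eqr_div //; last by apply/lt0r_neq0; lra.
apply/eqP.
have -> : (b - s) * (b + s) = b ^+ 2 - s ^+ 2 by ring.
rewrite s2; ring.
Qed.

Lemma rentE (b c theta a : R) : 0 < b -> 0 < c - theta ->
  rent_diss b c theta a = rd b (c - theta) a.
Proof.
move=> b0 k0; rewrite /rent_diss /rd; case: ifP => // hk.
by rewrite xstarE.
Qed.

Lemma mono_pure (b k a1 a2 : R) : 0 < b -> 0 < k -> a1 < a2 -> a2 * k <= b ^+ 2 ->
  rd b k a1 < rd b k a2.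
Proof.
move=> b0 k0 a12 h2.
have h1 : a1 * k <= b ^+ 2.
  have : a1 * k < a2 * k by rewrite ltr_pM2r.
  lra.
rewrite /rd h1 h2.
have lt : Num.sqrt (b ^+ 2 - a2 * k) < Num.sqrt (b ^+ 2 - a1 * k).
  rewrite ltr_sqrt; last first.
    have : a1 * k < a2 * k by rewrite ltr_pM2r.
    lra.
  have : a1 * k < a2 * k by rewrite ltr_pM2r.
  lra.
have s0 : 0 <= Num.sqrt (b ^+ 2 - a2 * k) := sqrtr_ge0 _.
move: lt s0; set s1 := Num.sqrt (b ^+ 2 - a1 * k); set s2 := Num.sqrt (b ^+ 2 - a2 * k).
move=> lt s0.
rewrite -subr_gt0.
have -> : 2 * (k / (b + s2)) - 2 * (k / (b + s1)) =
   (2 * k * (s1 - s2)) / ((b + s1) * (b + s2)).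
  field; apply/andP; split; apply/lt0r_neq0; lra.
apply: divr_gt0.
  apply: mulr_gt0; lra.
apply: mulr_gt0; lra.
Qed.

Lemma pure_dev {a b k x s y w : R} : 0 <= s -> y ^+ 2 <= w -> a * x = b - s ->
  k = x * (b + s) ->
  (k - a * x ^+ 2) * y - (b - a * x) * w <= (k - a * x ^+ 2) * x - (b - a * x) * x ^+ 2.
Proof.
move=> s0 hw ax kx.
have eA : k - a * x ^+ 2 = 2 * x * s.
  have -> : a * x ^+ 2 = (a * x) * x by ring.
  rewrite ax kx; ring.
have eB : b - a * x = s by lra.
rewrite eA eB.
have h1 : 0 <= s * (w - y ^+ 2) by apply: mulr_ge0; lra.
have h2 : 0 <= s * (x - y) ^+ 2 by apply: mulr_ge0 => //; exact: sqr_ge0.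
nra.
Qed.

End final.

Theorem corollary2 (R : realType) (b c theta : R) :
  0 < b -> 0 < c -> 0 < theta -> theta < c ->
  (* equilibria exist for every a *)
  (forall a : R, exists mu nu : probability R R,
      is_equilibrium a b c theta mu nu) /\
  (* every equilibrium has total expected effort equal to rent_diss a,
     i.e. 2 x*(a) on the pure region and 2b/a on the mixed region *)
  (forall (a : R) (mu nu : probability R R),
      is_equilibrium a b c theta mu nu ->
      total_effort mu nu = (rent_diss b c theta a)%:E) /\
  (* strictly increasing in a on the pure region b^2 >= a (c - theta) *)
  (forall a1 a2 : R, a1 < a2 -> a2 * (c - theta) <= b ^+ 2 ->
      rent_diss b c theta a1 < rent_diss b c theta a2) /\
  (* strictly decreasing in a on the mixed region b^2 < a (c - theta) *)
  (forall a1 a2 : R, b ^+ 2 < a1 * (c - theta) -> a1 < a2 ->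
      rent_diss b c theta a2 < rent_diss b c theta a1) /\
  (* hence maximised exactly at b^2 = a (c - theta) *)
  (forall a : R, a != b ^+ 2 / (c - theta) ->
      rent_diss b c theta a < rent_diss b c theta (b ^+ 2 / (c - theta))).
Proof.
move=> b0 c0 t0 tc.
have k0 : 0 < c - theta by lra.
have P3 : forall a1 a2 : R, a1 < a2 -> a2 * (c - theta) <= b ^+ 2 ->
      rent_diss b c theta a1 < rent_diss b c theta a2.
  by move=> a1 a2 h1 h2; rewrite !rentE //; exact: mono_pure.
have P4 : forall a1 a2 : R, b ^+ 2 < a1 * (c - theta) -> a1 < a2 ->
      rent_diss b c theta a2 < rent_diss b c theta a1.
  move=> a1 a2 h1 h2; rewrite !rentE // /rd.
  have a10 : 0 < a1.
    have : 0 < a1 * (c - theta) by have := sqr_ge0 b; lra.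
    by rewrite pmulr_lgt0.
  have h2' : b ^+ 2 < a2 * (c - theta).
    have : a1 * (c - theta) < a2 * (c - theta) by rewrite ltr_pM2r.
    lra.
  rewrite !leNgt h1 h2' /=.
  rewrite -subr_gt0.
  have -> : 2 * b / a1 - 2 * b / a2 = 2 * b * (a2 - a1) / (a1 * a2).
    field; apply/andP; split; apply/lt0r_neq0; lra.
  apply: divr_gt0; first by apply: mulr_gt0; lra.
  by apply: mulr_gt0; lra.
split.
  move=> a.
  have [hk|hk] := leP (a * (c - theta)) (b ^+ 2).
    set s := Num.sqrt (b ^+ 2 - a * (c - theta)).
    have s0 : 0 <= s := sqrtr_ge0 _.
    have s2 : s ^+ 2 = b ^+ 2 - a * (c - theta) by rewrite sqr_sqrtr // subr_ge0.
    set x := (c - theta) / (b + s).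
    have x0 : 0 <= x by apply: divr_ge0; lra.
    have kx : c - theta = x * (b + s) by rewrite /x; field; lra.
    have ax : a * x = b - s.
      apply: (@mulIf _ (b + s)); first by apply/lt0r_neq0; lra.
      rewrite -mulrA -kx.
      have -> : (b - s) * (b + s) = b ^+ 2 - s ^+ 2 by ring.
      rewrite s2; ring.
    pose mu := mixp (lexx 0) (@ler01 R) x.
    have hmu : admissible mu := mix_adm _ _ x0.
    exists mu, mu; split => //.
      move=> mu' hmu'.
      rewrite !(Epayoff1E _ _ _ _ _ _ hmu' hmu) !(Epayoff1E _ _ _ _ _ _ hmu hmu) lee_fin.
      rewrite !mix_mom1 // !mix_mom2 // subr0 !mul1r.
      have := pure_dev s0 (mom2_ge _ hmu') ax kx.
      lra.
    move=> nu' hnu'.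
    rewrite !(Epayoff2E _ _ _ _ _ _ hmu hnu') !(Epayoff2E _ _ _ _ _ _ hmu hmu) lee_fin.
    rewrite !mix_mom1 // !mix_mom2 // subr0 !mul1r.
    have := pure_dev s0 (mom2_ge _ hnu') ax kx.
    lra.
  have a0 : 0 < a.
    have : 0 < a * (c - theta) by have := sqr_ge0 b; lra.
    by rewrite pmulr_lgt0.
  have ak0 : 0 < a * (c - theta) by apply: mulr_gt0.
  set q := b ^+ 2 / (a * (c - theta)).
  have q0 : 0 <= q by apply: divr_ge0; [exact: sqr_ge0 | lra].
  have q1 : q <= 1 by rewrite /q ler_pdivrMr // mul1r ltW.
  have hp0 : 0 <= 1 - q by lra.
  have hp1 : 1 - q <= 1 by lra.
  set z := (c - theta) / b.
  have z0 : 0 <= z by apply: divr_ge0; lra.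
  pose mu := mixp hp0 hp1 z.
  have hmu : admissible mu := mix_adm _ _ z0.
  have an : a != 0 by apply/lt0r_neq0.
  have bn : b != 0 by apply/lt0r_neq0.
  have kn : c - theta != 0 by apply/lt0r_neq0.
  have m1 : mom1 mu = b / a.
    rewrite /mu mix_mom1 // /q /z; field.
    by rewrite ?an ?bn ?kn.
  have m2 : mom2 mu = (c - theta) / a.
    rewrite /mu mix_mom2 // /q /z; field.
    by rewrite ?an ?bn ?kn.
  have eA : c - theta - a * mom2 mu = 0 by rewrite m2; field; apply/lt0r_neq0.
  have eB : a * mom1 mu - b = 0 by rewrite m1; field; apply/lt0r_neq0.
  exists mu, mu; split => //.
    move=> mu' hmu'.
    rewrite !(Epayoff1E _ _ _ _ _ _ hmu' hmu) !(Epayoff1E _ _ _ _ _ _ hmu hmu) lee_fin.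
    by rewrite eA eB !mul0r.
  move=> nu' hnu'.
  rewrite !(Epayoff2E _ _ _ _ _ _ hmu hnu') !(Epayoff2E _ _ _ _ _ _ hmu hmu) lee_fin.
  have eA' : a * mom1 mu - b = 0 := eB.
  have e1 : forall m1' m2' : R, 2^-1 + (c - theta) * m1' - b * m2' + (a * m2' - c) * mom1 mu
     + (b - a * m1') * mom2 mu = 2^-1 - c * mom1 mu + b * mom2 mu
       + m1' * (c - theta - a * mom2 mu) + m2' * (a * mom1 mu - b).
    by move=> m1' m2'; ring.
  by rewrite !e1 eA eB !mulr0.
split.
  move=> a mu nu [hmu hnu H1 H2].
  rewrite total_effortE // rentE //; congr (_%:E).
  have hdir : forall x : R, 0 <= x -> admissible (mixp (lexx 0) (@ler01 R) x).
    by move=> x x0; exact: mix_adm.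
  apply: (main_real b0 k0 (mom1_ge0 _ hmu) (mom2_ge _ hmu) (mom1_ge0 _ hnu) (mom2_ge _ hnu)).
  - move=> x x0.
    have := H1 _ (hdir x x0).
    rewrite !(Epayoff1E _ _ _ _ _ _ (hdir x x0) hnu) !(Epayoff1E _ _ _ _ _ _ hmu hnu) lee_fin.
    rewrite mix_mom1 // mix_mom2 // subr0 !mul1r.
    lra.
  - move=> y y0.
    have := H2 _ (hdir y y0).
    rewrite !(Epayoff2E _ _ _ _ _ _ hmu (hdir y y0)) !(Epayoff2E _ _ _ _ _ _ hmu hnu) lee_fin.
    rewrite mix_mom1 // mix_mom2 // subr0 !mul1r.
    lra.
split => //.
split => //.
move=> a ha.
set a0 := b ^+ 2 / (c - theta).
have a0k : a0 * (c - theta) = b ^+ 2 by rewrite /a0; field; apply/lt0r_neq0.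
have [hk|hk] := leP (a * (c - theta)) (b ^+ 2).
  apply: P3; last by rewrite a0k.
  have : a * (c - theta) <= a0 * (c - theta) by rewrite a0k.
  rewrite ler_pM2r // le_eqVlt => /orP[/eqP e|//].
  by rewrite e eqxx in ha.
rewrite !rentE // /rd.
rewrite leNgt hk /= a0k lexx subrr sqrtr0 addr0.
have a0p : 0 < a0 by rewrite /a0; apply: divr_gt0 => //; rewrite exprn_gt0.
have ap : a0 < a.
  by rewrite -(ltr_pM2r k0) a0k.
have ap0 : 0 < a by lra.
rewrite -subr_gt0.
have -> : 2 * ((c - theta) / b) - 2 * b / a = 2 * (a * (c - theta) - b ^+ 2) / (a * b).
  field; apply/andP; split; apply/lt0r_neq0; lra.
apply: divr_gt0; first by apply: mulr_gt0; lra.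
by apply: mulr_gt0.
Qed.
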